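(* Let $k$ be an algebraically closed field of characteristic $0$, $d\ge3$, $n\ge1$, and let $V_n$ have basis $v_1,\dots,v_n$ with symmetric $d$-linear form $\Theta_d(v_{i_1},\dots,v_{i_d})=1$ if $i_1+\dots+i_d=(d-1)n+1$ and $0$ otherwise. Then the center $\mathrm{Cent}_k(V_n,\Theta_d)=\{f\in\mathrm{End}_k(V_n):\Theta_d(fu_1,u_2,\dots,u_d)=\Theta_d(u_1,fu_2,\dots,u_d)\ \forall u_i\}$ is a maximal commutative subalgebra of $\mathrm{End}_k(V_n)$.
   Context: The map $\psi(v_i)=v_{i-1}$ ($v_0=0$) belongs to the center, and the center equals $k[\psi]$. *)

(* Defs.v *)
From HB Require Import structures.
From mathcomp Require Import all_boot all_order all_algebra.
Set Implicit Arguments. Unset Strict Implicit. Unset Printing Implicit Defensive.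
Import GRing.Theory.
Local Open Scope ring_scope.

(* V_n = row vectors 'rV[k]_n; basis vector v_{i+1} is delta at index i : 'I_n
   (0-based).  Endomorphisms are matrices acting on the right: f u := u *m f. *)

(* The symmetric d-linear form Theta_d, as the multilinear extension of
   Theta_d(v_{i_1},...,v_{i_d}) = [i_1+...+i_d = (d-1)n+1]. *)
Definition Theta (k : fieldType) (d n : nat) (u : 'I_d -> 'rV[k]_n) : k :=
  \sum_(s : {ffun 'I_d -> 'I_n} | (\sum_(j < d) (s j).+1)%N == ((d - 1) * n + 1)%N)
     \prod_(j < d) u j 0 (s j).

Definition upd (k : fieldType) (d n : nat) (u : 'I_d -> 'rV[k]_n) (i : 'I_d)
  (f : 'M[k]_n) : 'I_d -> 'rV[k]_n :=
  fun j => if j == i then u j *m f else u j.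

Definition Cent (k : fieldType) (d n : nat) (f : 'M[k]_n) : Prop :=
  forall (i0 i1 : 'I_d), nat_of_ord i0 = 0%N -> nat_of_ord i1 = 1%N ->
  forall u : 'I_d -> 'rV[k]_n, Theta (upd u i0 f) = Theta (upd u i1 f).

Definition is_subalgebra (k : fieldType) (n : nat) (A : 'M[k]_n -> Prop) : Prop :=
  [/\ A 1%:M,
      (forall f g, A f -> A g -> A (f + g)),
      (forall (c : k) f, A f -> A (c *: f)) &
      (forall f g, A f -> A g -> A (f *m g))].

Definition is_commutative (k : fieldType) (n : nat) (A : 'M[k]_n -> Prop) : Prop :=
  forall f g, A f -> A g -> f *m g = g *m f.

Definition maximal_commutative_subalgebra (k : fieldType) (n : nat)
  (A : 'M[k]_n -> Prop) : Prop :=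
  [/\ is_subalgebra A, is_commutative A &
      forall B : 'M[k]_n -> Prop, is_subalgebra B -> is_commutative B ->
        (forall f, A f -> B f) -> forall f, B f -> A f].

(* Main.v *)
Require Import Defs.
From HB Require Import structures.
From mathcomp Require Import all_boot all_order all_algebra.
From mathcomp Require Import zify ring.
Set Implicit Arguments. Unset Strict Implicit. Unset Printing Implicit Defensive.
Import GRing.Theory.
Local Open Scope ring_scope.

Section S.
Variable k : fieldType.
Variables d n : nat.

Definition setf (t : {ffun 'I_d -> 'I_n}) (i : 'I_d) (x : 'I_n) : {ffun 'I_d -> 'I_n} :=
  [ffun j => if j == i then x else t j].

Definition Tot (t : {ffun 'I_d -> 'I_n}) : nat := (\sum_(j < d) (t j).+1)%N.

Definition W (i : 'I_d) (f : 'M[k]_n) (t : {ffun 'I_d -> 'I_n}) : k :=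
  \sum_(x : 'I_n | Tot (setf t i x) == ((d - 1) * n + 1)%N) f (t i) x.

Definition Pi (u : 'I_d -> 'rV[k]_n) (t : {ffun 'I_d -> 'I_n}) : k :=
  \prod_(j < d) u j 0 (t j).

Lemma setf_id t i x : setf (setf t i x) i (t i) = t.
Proof. by apply/ffunP => j; rewrite !ffunE; case: eqP => [->|]. Qed.

Lemma setf_at t i x : setf t i x i = x.
Proof. by rewrite ffunE eqxx. Qed.

Lemma Tot_set t i x : (Tot (setf t i x) + t i = Tot t + x)%N.
Proof.
have E : (\sum_(j < d | j != i) (setf t i x j).+1 = \sum_(j < d | j != i) (t j).+1)%N.
  by apply: eq_bigr => j /negbTE ji; rewrite ffunE ji.
rewrite /Tot (bigD1 i) //= [in RHS](bigD1 i) //= setf_at E.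
set S := (\sum_(j < d | j != i) (t j).+1)%N. rewrite -/S. lia.
Qed.

Lemma Tot_le t i : (Tot t <= (d - 1) * n + 1 + t i)%N.
Proof.
rewrite /Tot (bigD1 i) //=.
have H : (\sum_(j < d | j != i) (t j).+1 <= \sum_(j < d | j != i) n)%N.
  by apply: leq_sum => j _; exact: ltn_ord.
have E : (\sum_(j < d) n = n + \sum_(j < d | j != i) n)%N by rewrite (bigD1 i).
have E2 : (\sum_(j < d) n = d * n)%N by rewrite big_const_ord iter_addn_0 mulnC.
have E3 : ((d - 1) * n = d * n - n)%N by rewrite mulnBl mul1n.
move: H E E2 E3; set S := (\sum_(j < d | j != i) (t j).+1)%N; set S2 := (\sum_(j < d | j != i) n)%N; set S3 := (\sum_(j < d) n)%N; set DN := (d * n)%N; set D1 := ((d - 1) * n)%N; lia.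
Qed.

Lemma Theta_upd u i f : Theta (upd u i f) = \sum_t Pi u t * W i f t.
Proof.
rewrite /Theta big_mkcond /=.
transitivity (\sum_(s : {ffun 'I_d -> 'I_n}) \sum_(c : 'I_n)
   (if (Tot s == ((d - 1) * n + 1)%N) then f c (s i) * Pi u (setf s i c) else 0)).
  apply: eq_bigr => s _. rewrite -/(Tot s). case: ifP => _; last by rewrite big1.
  have Q : \prod_(j < d | j != i) upd u i f j 0 (s j) = \prod_(j < d | j != i) u j 0 (s j).
    by apply: eq_bigr => j /negbTE ji; rewrite /upd ji.
  rewrite (bigD1 i) //= Q {1}/upd eqxx mxE big_distrl /=. apply: eq_bigr => c _.
  rewrite /Pi [in RHS](bigD1 i) //= setf_at.
  have Q2 : \prod_(j < d | j != i) u j 0 (setf s i c j) = \prod_(j < d | j != i) u j 0 (s j).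
    by apply: eq_bigr => j /negbTE ji; rewrite ffunE ji.
  rewrite Q2; ring.
rewrite pair_big /=.
rewrite [RHS](eq_bigr (fun t => \sum_(x : 'I_n) (if Tot (setf t i x) == ((d - 1) * n + 1)%N
    then f (t i) x * Pi u t else 0))); last first.
  move=> t _; rewrite /W big_distrr big_mkcond /=; apply: eq_bigr => x _.
  by case: ifP => _; rewrite ?mulr0 // mulrC.
rewrite pair_big /=.
have inj : injective (fun p : {ffun 'I_d -> 'I_n} * 'I_n => (setf p.1 i p.2, p.1 i)).
  move=> [s c] [s' c'] /= [E1 E2].
  have : setf (setf s i c) i (s i) = setf (setf s' i c') i (s' i) by rewrite E1 E2.
  rewrite !setf_id => ->.
  by have := congr1 (fun t : {ffun 'I_d -> 'I_n} => t i) E1; rewrite /= !setf_at => ->.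
rewrite [RHS](reindex_inj inj) /=.
apply: eq_bigr => [[s c]] _ /=.
by rewrite setf_id setf_at.
Qed.

Lemma Pi_delta (t0 : {ffun 'I_d -> 'I_n}) t : Pi (fun j => delta_mx 0 (t0 j)) t = (t == t0)%:R.
Proof.
rewrite /Pi; case: eqP => [->|/eqP ne].
  by rewrite big1 // => j _; rewrite mxE !eqxx.
have [j hj]: exists j, t j != t0 j.
  apply/existsP; apply: contraR ne => /existsPn H; apply/eqP/ffunP => j.
  by apply/eqP; move: (H j); rewrite negbK.
by rewrite (bigD1 j) //= mxE eqxx /= (negbTE hj) mul0r.
Qed.

Lemma Theta_delta (t0 : {ffun 'I_d -> 'I_n}) i f :
  Theta (upd (fun j => delta_mx 0 (t0 j)) i f) = W i f t0.
Proof.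
rewrite Theta_upd (bigD1 t0) //= Pi_delta eqxx mul1r big1 ?addr0 // => t /negbTE ne.
by rewrite Pi_delta ne mul0r.
Qed.

Lemma W_eq i (f : 'M[k]_n) (t : {ffun 'I_d -> 'I_n}) (x : 'I_n) :
  (nat_of_ord x = t i + ((d - 1) * n + 1) - Tot t)%N -> W i f t = f (t i) x.
Proof.
move=> hx; have := Tot_le t i; have := Tot_set t i x => h1 h2.
rewrite /W (bigD1 x) /=; last by apply/eqP; lia.
rewrite big1 ?addr0 // => y /andP [/eqP h3 h4].
case/negP: h4; apply/eqP/val_inj => /=.
have := Tot_set t i y; lia.
Qed.

Lemma W_0 i (f : 'M[k]_n) (t : {ffun 'I_d -> 'I_n}) : (n <= t i + ((d - 1) * n + 1) - Tot t)%N -> W i f t = 0.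
Proof.
move=> h; rewrite /W big1 // => y /eqP h1.
have := Tot_set t i y; have := ltn_ord y; lia.
Qed.

End S.

Section T.
Variable k : fieldType.
Variables d n : nat.
Notation N := n.+1.

Definition P (f : 'M[k]_N) (m : nat) : k := f ord_max (inord (n - m)).
Definition TL (f : 'M[k]_N) :=
  forall a b : 'I_N, f a b = if (b <= a)%N then P f (a - b) else 0.

Lemma TL_W (f : 'M[k]_N) i (t : {ffun 'I_d -> 'I_N}) : TL f ->
  W i f t = if ((d - 1) * N + 1 <= Tot t)%N then P f (Tot t - ((d - 1) * N + 1)) else 0.
Proof.
move=> tl; have hb := Tot_le t i; have hti := ltn_ord (t i).
move: hb; set T := ((d - 1) * N + 1)%N; set TT := Tot t => hb.
case: (ltnP (t i + T - TT) N) => h.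
- rewrite (@W_eq _ _ _ i f t (Ordinal h)) // tl /=.
  case: ifPn => h1; case: ifPn => h2 //; try lia.
  congr (P f _); lia.
- rewrite W_0 //; case: ifPn => // h1; lia.
Qed.

Lemma TL_Cent (f : 'M[k]_N) : TL f -> Cent d f.
Proof.
move=> tl i0 i1 _ _ u; rewrite !Theta_upd; apply: eq_bigr => t _; by rewrite !TL_W.
Qed.

Lemma Cent_TL (f : 'M[k]_N) : (3 <= d)%N -> Cent d f -> TL f.
Proof.
move=> d3 C a b.
have h0 : (0 < d)%N by lia.
have h1 : (1 < d)%N by lia.
have h2 : (2 < d)%N by lia.
pose i0 := Ordinal h0; pose i1 := Ordinal h1; pose i2 := Ordinal h2.
pose t0 : {ffun 'I_d -> 'I_N} := [ffun => ord_max].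
pose x : 'I_N := inord (n - b).
pose t := setf (setf t0 i0 a) i2 x.
have Tt0 : Tot t0 = (d * N)%N.
  rewrite /Tot (eq_bigr (fun _ => N)); last by move=> j _; rewrite ffunE.
  by rewrite big_const_ord iter_addn_0 mulnC.
have ne20 : (i2 == i0) = false by [].
have ne10 : (i1 == i0) = false by [].
have ne12 : (i1 == i2) = false by [].
have e1 := Tot_set t0 i0 a.
have e2 := Tot_set (setf t0 i0 a) i2 x.
rewrite ffunE ne20 ffunE in e2.
rewrite ffunE in e1.
have xv : nat_of_ord x = (n - b)%N by rewrite inordK //; lia.
have ti0 : t i0 = a by rewrite ffunE eq_sym ne20 setf_at.
have ti1 : t i1 = ord_max by rewrite !ffunE ne12 ne10.
have E := C i0 i1 erefl erefl (fun j => delta_mx 0 (t j)).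
rewrite !Theta_delta in E.
have hb := ltn_ord b; have ha := ltn_ord a.
have EN : ((d - 1) * N = d * N - N)%N by rewrite mulnBl mul1n.
have d3N : (3 * N <= d * N)%N by rewrite leq_mul2r d3 orbT.
move: e1 e2 EN d3N xv; rewrite /= -/t; set TT := Tot t; set T1 := Tot _; set DN := (d * N)%N; set D1 := ((d - 1) * N)%N => e1 e2 EN d3N xv.
rewrite (@W_eq _ _ _ i0 f t b) in E; last by rewrite ti0 -/TT; lia.
rewrite ti0 in E; rewrite E.
case: (ltnP (t i1 + (D1 + 1) - TT) N) => h.
- rewrite (@W_eq _ _ _ i1 f t (Ordinal h)) //.
  rewrite ifT; last by move: h; rewrite ti1 /=; lia.
  rewrite /P; congr (f _ _); first exact: ti1.
  apply: val_inj; move: h; rewrite /= inordK ?ti1 /=; try lia.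
- rewrite W_0 // ifF //; apply/negbTE; move: h; rewrite ti1 /=; lia.
Qed.

End T.

Section C.
Variable k : fieldType.
Variable n : nat.
Notation N := n.+1.

Definition psi : 'M[k]_N := \matrix_(a, b) ((a : nat) == b.+1)%:R.

Lemma mul_psi_r (f : 'M[k]_N) a b :
  (f *m psi) a b = if (b < n)%N then f a (inord b.+1) else 0.
Proof.
rewrite mxE; case: ltnP => hb.
- rewrite (bigD1 (inord b.+1)) //= big1 ?addr0.
  + by rewrite mxE inordK ?eqxx ?mulr1.
  + move=> c hc; rewrite mxE; case: eqP => [e|_]; last by rewrite mulr0.
    case/negP: hc; apply/eqP/val_inj; rewrite /= inordK //.
- rewrite big1 // => c _; rewrite mxE; case: eqP => [e|]; last by rewrite mulr0.
  have := ltn_ord c; lia.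
Qed.

Lemma mul_psi_l (f : 'M[k]_N) a b :
  (psi *m f) a b = if (0 < a)%N then f (inord a.-1) b else 0.
Proof.
rewrite mxE; case: ltnP => ha.
- rewrite (bigD1 (inord a.-1)) //= big1 ?addr0.
  + have e : ((inord a.-1 : 'I_N) : nat) = a.-1 by rewrite inordK //; have := ltn_ord a; lia.
    by rewrite mxE e prednK // eqxx mul1r.
  + move=> c hc; rewrite mxE; case: eqP => [e|_]; last by rewrite mul0r.
    case/negP: hc; apply/eqP/val_inj; have := ltn_ord a; rewrite /= e /= inordK //; exact: ltn_ord.
- rewrite big1 // => c _; rewrite mxE; case: eqP => [e|]; last by rewrite mul0r.
  lia.
Qed.

Definition Comm (f : 'M[k]_N) := f *m psi = psi *m f.

Lemma Comm_TL f : Comm f -> TL f.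
Proof.
move=> c.
pose F (x y : nat) := f (inord x) (inord y).
have S1 : forall x y, (x < n)%N -> (y < n)%N -> F x.+1 y.+1 = F x y.
  move=> x y hx hy; have := congr1 (fun M : 'M[k]_N => M (inord x.+1) (inord y)) c.
  rewrite /= mul_psi_r mul_psi_l !inordK //; try lia.
  by rewrite ifT // ifT.
have S0 : forall y, (y < n)%N -> F 0%N y.+1 = 0.
  move=> y hy; have := congr1 (fun M : 'M[k]_N => M (inord 0) (inord y)) c.
  rewrite /= mul_psi_r mul_psi_l !inordK // ?hy /=; [by move=> h; exact: h| lia].
have C1 : forall kk x y, (x + kk = n)%N -> (y <= x)%N -> F x y = P f (x - y).
  elim=> [|kk IH] x y e hy.
    rewrite /F /P; congr (f _ _); apply: val_inj; rewrite /= !inordK; lia.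
  rewrite -S1; try lia. rewrite IH; try lia. by congr (P f _); lia.
have C2 : forall x y, (x < y)%N -> (y <= n)%N -> F x y = 0.
  elim=> [|x IH] [|y] hxy hy //.
    by apply: S0; lia.
  rewrite S1; try lia. apply: IH; lia.
move=> a b; have -> : f a b = F a b by rewrite /F !inord_val.
case: leqP => h.
- apply: (C1 (n - a)%N); have := ltn_ord a; lia.
- apply: C2 => //; have := ltn_ord b; lia.
Qed.

Lemma TL_Comm f : TL f -> Comm f.
Proof.
move=> tl; apply/matrixP => a b; rewrite mul_psi_r mul_psi_l.
have := ltn_ord a; have := ltn_ord b => hb ha.
case: ltnP => h1; case: ltnP => h2; rewrite ?tl ?inordK //; try lia.
- case: ifPn => h3; case: ifPn => h4 //; try lia. congr (P f _); lia.
- rewrite ifF //; apply/negbTE; lia.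
- rewrite ifF //; apply/negbTE; lia.
Qed.

Definition G (f g : 'M[k]_N) (a b c : nat) : k :=
  if (b <= c <= a)%N then P f (a - c) * P g (c - b) else 0.

Lemma TL_mulE f g a b : TL f -> TL g ->
  (f *m g) a b = \sum_(0 <= c < N) G f g a b c.
Proof.
move=> tf tg; rewrite mxE big_mkord; apply: eq_bigr => c _.
rewrite (tf a c) (tg c b) /G.
by case: (c <= a)%N; case: (b <= c)%N; rewrite ?mulr0 ?mul0r.
Qed.

Lemma TL_comm (f g : 'M[k]_N) : TL f -> TL g -> f *m g = g *m f.
Proof.
move=> tf tg; apply/matrixP => a b; rewrite !TL_mulE //.
have ha := ltn_ord a; have hb := ltn_ord b.
case: (leqP b a) => hab; last first.
  rewrite !big1_seq // => c _; rewrite /G ifF //; apply/negbTE; lia.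
rewrite !(@big_cat_nat _ _ _ b 0 N) //=; try lia.
rewrite !(@big_cat_nat _ _ _ a.+1 b N) //=; try lia.
have Z : forall f1 g1, \sum_(0 <= c < b) G f1 g1 a b c = 0.
  by move=> f1 g1; rewrite big_nat_cond big1 // => c /andP [/andP [_ h] _]; rewrite /G ifF //; apply/negbTE; lia.
have Z2 : forall f1 g1, \sum_(a.+1 <= c < N) G f1 g1 a b c = 0.
  by move=> f1 g1; rewrite big_nat_cond big1 // => c /andP [/andP [h _] _]; rewrite /G ifF //; apply/negbTE; lia.
rewrite !Z !Z2 !add0r !addr0 big_nat_rev /=.
apply: eq_big_nat => c hc; rewrite /G !ifT; try lia. rewrite mulrC.
have -> : (b + a.+1 - c.+1 - b = a - c)%N by lia.
by have -> : (a - (b + a.+1 - c.+1) = c - b)%N by lia.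
Qed.

End C.

Theorem lemma3p4 (k : closedFieldType) (d n : nat) :
  [pchar k] =i pred0 -> (3 <= d)%N -> (1 <= n)%N ->
  maximal_commutative_subalgebra (@Cent k d n).
Proof.
move=> _ d3; case: n => [//|n] _.
have CE : forall f : 'M[k]_n.+1, Cent d f <-> Comm f.
  move=> f; split => [/(Cent_TL d3)/TL_Comm //|/Comm_TL/TL_Cent //].
split.
- split.
  + by apply/CE; rewrite /Comm mul1mx mulmx1.
  + move=> f g /CE hf /CE hg; apply/CE; rewrite /Comm mulmxDl mulmxDr hf hg.
    done.
  + move=> c f /CE hf; apply/CE; by rewrite /Comm -scalemxAl hf scalemxAr.
  + move=> f g /CE hf /CE hg; apply/CE; by rewrite /Comm -mulmxA hg !mulmxA hf.
- move=> f g /CE/Comm_TL hf /CE/Comm_TL hg; exact: TL_comm.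
- move=> B [B1 BD BZ BM] Bc AB f Bf.
  have Bpsi : B (psi k n) by apply: AB; apply/CE.
  by apply/CE; apply: Bc.
Qed.
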